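(* Consider the setting described in the context and assume $D>2$. For $t\ge 1$ let $\mathcal{I}_0(t)=\bigcup_{m=0}^{t-1}\mathcal{F}_0(m)$ and $\mathcal{I}_1(t)=\Big(\bigcup_{m=0}^{t-1}\mathcal{F}_{D-1}(m)\Big)\setminus \mathcal{I}_0(t)$. Then for every $t\ge1$, $a_i(t)=1$ for all $i\in\mathcal{I}_1(t)$.
   Context: $G=(V,E)$ is a finite connected undirected graph with node set $V=\{0,\dots,N-1\}$; $\mathcal{N}(i)$ denotes the set of neighbours of $i$. Every edge has length $1$, $d_{ij}$ is the hop distance between $i$ and $j$, and $\mathcal{F}_k(m)=\{i\in V : d_{ik}=m\}$. Every node carries value $v_i=1$. The source set is $S(t)=\{D-1\}$ for $t\le 0$ and $S(t)=\{0\}$ for $t\ge 1$. The integer $D$ satisfies $\max_{i\in V}d_{i0}=D-1$, and nodes are labelled so that $0,1,\dots,D-1$ is a path in which node $i$ is a neighbour of $i+1$ with $d_{0,i}=i$ for $0\le i\le D-1$. The algorithm updates, for $t\ge1$: $\hat d_i(t)=0$ if $i\in S(t)$, and $\hat d_i(t)=\min_{j\in\mathcal{N}(i)}\{\hat d_j(t-1)+1\}$ otherwise; $c_i(t)=i$ if $i\in S(t)$, and otherwise $c_i(t)$ is a minimizer $j\in\mathcal{N}(i)$ of $\hat d_j(t-1)+1$; $C_i(t)=\{j : c_j(t-1)=i \text{ and } \hat d_j(t-1)=\hat d_i(t)+1\}$; $a_i(t)=\sum_{j\in C_i(t)}a_j(t-1)+v_i$. Initial values $(\hat d_i(0),c_i(0),a_i(0))$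 are steady-state values of these recursions when the source set is constantly $\{D-1\}$; in particular $\hat d_i(0)=m$ for all $i\in\mathcal{F}_{D-1}(m)$, and for every integer $m$, $\sum_{i\in\mathcal{F}_{D-1}(m)}a_i(0)\le N$. *)

(* Defs.v *)
From mathcomp Require Import all_boot all_order.
Set Implicit Arguments. Unset Strict Implicit. Unset Printing Implicit Defensive.

Section Graph.
Variable n : nat.
(* Vertex set V = {0, ..., N-1} with N = n.+1 nodes. *)
Local Notation V := 'I_n.+1.
Variable e : rel V.  (* adjacency: j \in N(i) iff e i j *)

Definition undirected := symmetric e /\ irreflexive e.
Definition connected_graph := forall i j : V, connect e i j.

Fixpoint walkn (k : nat) (i j : V) : bool :=
  if k is k'.+1 then [exists l, e i l && walkn k' l j] else i == j.

(* hop distance: least k with a walk of length k from i to j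
   (equals n.+1 when j is unreachable, which cannot happen in a connected graph) *)
Definition dist (i j : V) : nat := find (fun k => walkn k i j) (iota 0 n.+1).

Definition F (k : V) (m : nat) : {set V} := [set i | dist i k == m].

(* Source set: S(t) = {D-1} for t <= 0, {0} for t >= 1 (t : nat) *)
Definition S (D t : nat) : {set V} :=
  if t == 0 then [set (inord D.-1 : V)] else [set (inord 0 : V)].

(* C_i(t) for the run (dh, c) : children j with c_j(t-1) = i and
   dh_j(t-1) = dh_i(t) + 1 ; here stated for time t.+1 *)
Definition children (dh : nat -> V -> nat) (c : nat -> V -> V) (t : nat) (i : V)
  : {set V} := [set j | (c t j == i) && (dh t j == (dh t.+1 i).+1)].

Definition step_ok (Src : {set V}) (dh : nat -> V -> nat) (c : nat -> V -> V)
  (a : nat -> V -> nat) (t : nat) : Prop :=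
  forall i : V,
    [/\ (i \in Src -> dh t.+1 i = 0 /\ c t.+1 i = i),
        (i \notin Src ->
           [/\ e i (c t.+1 i),
               (forall j, e i j -> dh t (c t.+1 i) <= dh t j)
             & dh t.+1 i = (dh t (c t.+1 i)).+1])
      & a t.+1 i = \sum_(j in children dh c t i) a t j + 1].

(* The initial state (dh 0, c 0, a 0) is a steady state of the recursions
   with constant source set {D-1} (all values v_i = 1). *)
Definition steady_state (D : nat) (d0 : V -> nat) (c0 : V -> V) (a0 : V -> nat)
  : Prop :=
  let s : V := inord D.-1 in
  forall i : V,
    [/\ (i = s -> d0 i = 0 /\ c0 i = i),
        (i <> s ->
           [/\ e i (c0 i),
               (forall j, e i j -> d0 (c0 i) <= d0 j)
             & d0 i = (d0 (c0 i)).+1])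
      & a0 i = \sum_(j | (c0 j == i) && (d0 j == (d0 i).+1)) a0 j + 1].

End Graph.

(* Main.v *)
Require Import Defs.
From mathcomp Require Import all_boot all_order.
From mathcomp Require Import zify.

Section Aux.
Variable n : nat.
Variable e : rel 'I_n.+1.

Lemma walk_dist k (x y : 'I_n.+1) : walkn e k x y -> dist e x y <= k.
Proof.
move=> W; rewrite /dist; case: (ltnP k n.+1) => Hk.
  rewrite leqNgt; apply/negP => Hlt.
  have := before_find 0 Hlt; rewrite nth_iota // add0n W //.
by apply: leq_trans (find_size _ _) _; rewrite size_iota.
Qed.

Lemma dist_walk (x y : 'I_n.+1) : dist e x y < n.+1 -> walkn e (dist e x y) x y.
Proof.
move=> H; have Hh : has (fun k => walkn e k x y) (iota 0 n.+1).
  by rewrite has_find size_iota.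
have := nth_find 0 Hh; rewrite nth_iota; first by rewrite add0n.
exact: H.
Qed.

Lemma dist_xx (x : 'I_n.+1) : dist e x x = 0.
Proof. by apply/eqP; rewrite -leqn0; apply: walk_dist => /=. Qed.

Lemma dist0 (x y : 'I_n.+1) : dist e x y = 0 -> x = y.
Proof. by move=> H; have := dist_walk x y; rewrite H => /(_ erefl) /= /eqP. Qed.

Lemma dist_nb (x y z : 'I_n.+1) : e x y -> dist e x z <= (dist e y z).+1.
Proof.
move=> Hxy; case: (ltnP (dist e y z) n.+1) => H.
  apply: walk_dist => /=; apply/existsP; exists y; rewrite Hxy; exact: dist_walk.
suff: dist e x z <= n.+1 by lia.
by rewrite /dist; apply: leq_trans (find_size _ _) _; rewrite size_iota.
Qed.

Lemma path_walk (x : 'I_n.+1) p : path e x p -> walkn e (size p) x (last x p).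
Proof.
elim: p x => [|y p IH] x /=; first by [].
move=> /andP[Hxy Hp]; apply/existsP; exists y; rewrite Hxy; exact: IH.
Qed.

Lemma conn_dist (x y : 'I_n.+1) : connect e x y -> dist e x y < n.+1.
Proof.
move=> /connectP[p Hp ->]; case: (shortenP Hp) => p' Hp' Hu _.
have W := walk_dist _ _ _ (path_walk x p' Hp').
have Hc : #|x :: p'| = size (x :: p') by apply/card_uniqP.
have := max_card (mem (x :: p')); rewrite Hc card_ord /=; lia.
Qed.

End Aux.
Arguments walk_dist {n e k x y}.
Arguments dist_walk {n e x y}.
Arguments dist_xx {n e x}.
Arguments dist0 {n e x y}.
Arguments dist_nb {n e x y} z.
Arguments conn_dist {n e x y}.

(* N = n.+1 nodes, vertex type 'I_n.+1 ; value v_i = 1 for all i. *)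
Theorem lemma3 (n : nat) (e : rel 'I_n.+1) (D : nat)
  (dh : nat -> 'I_n.+1 -> nat) (c : nat -> 'I_n.+1 -> 'I_n.+1)
  (a : nat -> 'I_n.+1 -> nat) :
  undirected e ->
  connected_graph e ->
  2 < D ->
  (* max_i d_{i0} = D - 1 *)
  \max_(i : 'I_n.+1) dist e i (inord 0) = D - 1 ->
  (* 0, 1, ..., D-1 is a path with d_{0,i} = i *)
  (forall k, k < D - 1 -> e (inord k) (inord k.+1)) ->
  (forall k, k <= D - 1 -> dist e (inord 0) (inord k) = k) ->
  (* initial values: steady state for constant source {D-1} *)
  steady_state e D (dh 0) (c 0) (a 0) ->
  (forall i, dh 0 i = dist e i (inord (D - 1))) ->
  (forall m, \sum_(i in F e (inord (D - 1)) m) a 0 i <= n.+1) ->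
  (* the algorithm's updates for t >= 1 *)
  (forall t, step_ok e (S n D t.+1) dh c a t) ->
  forall t, 1 <= t ->
  forall i, i \in [set j | dist e j (inord (D - 1)) < t]
                   :\: [set j | dist e j (inord 0) < t] ->
  a t i = 1.
Proof.
move=> [Hsym Hirr] Hconn HD _ Hpath Hd0 Hss Hdh0 _ Hstep t Ht i.
set s : 'I_n.+1 := inord (D - 1).
set z : 'I_n.+1 := inord 0.
have HS k : S n D k.+1 = [set z] by [].
have Hsz : s != z.
  apply/eqP => E; have := Hd0 (D - 1) (leqnn _).
  rewrite -/s E dist_xx; lia.
have L : forall k x, minn k (dist e x z) <= dh k x.
  elim=> [|k IH] x; first by rewrite min0n.
  have [H1 H2 _] := Hstep k x; rewrite HS in H1 H2.
  case: (boolP (x \in [set z])) => Hx.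
    by move: Hx; rewrite inE => /eqP ->; rewrite dist_xx minn0.
  have [He _ ->] := H2 Hx.
  have := IH (c k.+1 x); have := dist_nb z He; lia.
have Hns : e s (inord (D - 2)).
  rewrite Hsym /s; have := Hpath (D - 2); rewrite (_ : (D - 2).+1 = D - 1); last lia.
  by apply; lia.
have U : forall k x m, m <= k.+1 -> walkn e m x s -> dh k x <= k.+1.
  elim=> [|k IH] x m Hm W.
    by rewrite Hdh0; apply: leq_trans (walk_dist W) Hm.
  have [H1 H2 _] := Hstep k x; rewrite HS in H1 H2.
  case: (boolP (x \in [set z])) => Hx; first by rewrite (proj1 (H1 Hx)).
  have [He Hmin ->] := H2 Hx.
  have [y [m' [Hy Hm' Wy]]] : exists y m', [/\ e x y, m' <= k.+1 & walkn e m' y s].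
    case: m Hm W => [|m] Hm /= W.
      exists (inord (D - 2)), 1; rewrite (eqP W); split=> //=.
      by apply/existsP; exists s; rewrite -Hsym Hns /=.
    case/existsP: W => y /andP[Hy W]; by exists y, m.
  have := Hmin y Hy; have := IH y m' Hm' Wy; lia.
move: Ht i; case: t => [//|t] _ i.
rewrite !inE -/s -/z => /andP[Hi0 His].
have [_ _ ->] := Hstep t i.
rewrite big1 // => j; rewrite inE => /andP[/eqP Hcj /eqP Hdj].
exfalso.
case: t Hi0 His Hcj Hdj => [|k] Hi0 His Hcj Hdj.
  have Eis : i = s.
    by apply: (dist0 (e:=e)); lia.
  rewrite Eis in Hdj Hcj.
  have := Hss j; rewrite /= -subn1 -/s => -[A B _].
  case: (eqVneq j s) => Ejs.
    by move: Hdj; rewrite (proj1 (A Ejs)).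
  have Ejs' : j <> s by apply/eqP.
  have [_ _ Hj] := B Ejs'.
  have Hs1 : dh 1 s = 0 by move: Hdj; rewrite Hj Hcj Hdh0 dist_xx => -[].
  have [_ H2 _] := Hstep 0 s; rewrite HS in H2.
  have Hsn : s \notin [set z] by rewrite inE.
  by have [_ _] := H2 Hsn; rewrite Hs1.
have [H1 H2 _] := Hstep k j; rewrite HS in H1 H2.
case: (boolP (j \in [set z])) => Hj.
  have [_ Ecj] := H1 Hj; move: Hj; rewrite inE => /eqP Ejz.
  by move: Hi0; rewrite -Hcj Ecj Ejz dist_xx.
have [_ _ Hdj'] := H2 Hj.
rewrite Hcj in Hdj'.
have Hc := conn_dist (Hconn i s).
have Uk := U k i (dist e i s) ltac:(lia) (dist_walk Hc).
have Lk := L k.+2 i.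
lia.
Qed.
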